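(* Consider the Geo-Geo system with parameters $\mu_A,\mu_B\in(0,1)$. Its average AoI is $$\overline{\Delta}_{\text{Geo-Geo}}(\mu_A,\mu_B)=\frac{2\big(\mu_A^2+\mu_B^2+3\mu_A\mu_B-3\mu_A^2\mu_B-3\mu_A\mu_B^2+2\mu_A^2\mu_B^2\big)}{(\mu_A+\mu_B-\mu_A\mu_B)^3}.$$
   Context: **Time and sensors.** Time is slotted. Two sensors independently send time-stamped status updates about the same process to one monitor under the zero-wait policy: a new update is generated at the start of the slot right after the previous update of that sensor is delivered, with instantaneous acknowledgements. In the Geo-Geo system, sensor A completes its current update in each slot independently with probability $\mu_A$, and sensor B does so independently with probability $\mu_B$. Thus both sensors have i.i.d. geometric service times on $\{1,2,\dots\}$, with parameters $\mu_A$ and $\mu_B$. **AoI.** The monitor's AoI is $\Delta[t]=t-u(t)$, where $u(t)$ is the generation time of the freshest received update. It evolves by - $\Delta[t+1]=\Delta[t]+1$ if nothing is delivered in slot $t$; - $\Delta[t+1]=\min(t-G_i+1,\Delta[t]+1)$ otherwise, with $G_i$ the generation time of the delivered update. Equivalently, the system AoI is the minimum of the AoIs that each single sensor's update stream alone would produce. The average AoI is its long-run time average in steady state. *)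

(* Defs.v *)
From HB Require Import structures.
From mathcomp Require Import all_boot all_order all_algebra.
From mathcomp Require Import all_classical all_reals all_analysis.
Set Implicit Arguments. Unset Strict Implicit. Unset Printing Implicit Defensive.
Import Order.TTheory GRing.Theory Num.Theory.

(* A realisation of the per-slot completion events:
   (c t).1 = sensor A completes its current update in slot t,
   (c t).2 = sensor B completes its current update in slot t. *)
Definition coins := nat -> bool * bool.

Section Dynamics.
Variable c : coins.
Definition compA t := (c t).1.
Definition compB t := (c t).2.

(* generation time (start of slot) of the update sensor A/B has in service
   during slot t.  Zero-wait: the first updates are generated at slot 0, and
   an update whose service completes at the end of slot t (hence is delivered
   in slot t+1) is immediately followed by a new update generated at slot t+1. *)
Fixpoint genA t := if t is t'.+1 then (if compA t' then t'.+1 else genA t') else 0%N.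
Fixpoint genB t := if t is t'.+1 then (if compB t' then t'.+1 else genB t') else 0%N.

(* Some G = an update generated at time G is delivered in slot t.  An update
   generated at G with geometric service time S (number of slots of service)
   is delivered in slot G + S. *)
Definition delivA t : option nat :=
  if t is t'.+1 then (if compA t' then Some (genA t') else None) else None.
Definition delivB t : option nat :=
  if t is t'.+1 then (if compB t' then Some (genB t') else None) else None.

Definition upd (t : nat) (o : option nat) (d : nat) : nat :=
  if o is Some G then minn (t - G + 1) d else d.

Fixpoint aoi t : nat :=
  if t is t'.+1 then upd t' (delivB t') (upd t' (delivA t') (aoi t').+1) else 0%N.
End Dynamics.

Local Open Scope ring_scope.

Definition pslot (R : realType) (muA muB : R) (b : bool * bool) : R :=
  (if b.1 then muA else 1 - muA) * (if b.2 then muB else 1 - muB).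

Definition ext (n : nat) (w : {ffun 'I_n -> bool * bool}) : coins :=
  fun i => if insub i is Some j then w j else (false, false).

(* E[Delta[t]]: Delta[t] only depends on the events of slots < t, and the
   events of distinct slots / sensors are independent. *)
Definition expected_aoi (R : realType) (muA muB : R) (t : nat) : R :=
  \sum_(w : {ffun 'I_t -> bool * bool})
     (\prod_(i < t) pslot muA muB (w i)) * (aoi (ext w) t)%:R.

Definition avg_aoi (R : realType) (muA muB : R) (T : nat) : R :=
  (T%:R)^-1 * \sum_(t < T) expected_aoi muA muB t.

(* Main.v *)
Require Import Defs.
From HB Require Import structures.
From mathcomp Require Import all_boot all_order all_algebra.
From mathcomp Require Import all_classical all_reals all_analysis.
From mathcomp Require Import zify ring lra.
Import Order.TTheory GRing.Theory Num.Theory.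
Import numFieldNormedType.Exports.
Notation cA := Defs.compA.
Notation cB := Defs.compB.

Definition cnt (f : nat -> bool) lo n := (\sum_(lo <= i < lo + n) f i)%N.

Fixpoint gen (f : nat -> bool) t := if t is t'.+1 then (if f t' then t'.+1 else gen f t') else 0%N.

Lemma genAE c t : genA c t = gen (cA c) t.
Proof. by elim: t => //= t ->. Qed.
Lemma genBE c t : genB c t = gen (cB c) t.
Proof. by elim: t => //= t ->. Qed.

Lemma gen_le f s : (gen f s <= s)%N.
Proof. elim: s => //= s IH; case: (f s) => //; exact: leqW. Qed.

Lemma cntS f lo n : cnt f lo n.+1 = (cnt f lo n + f (lo + n))%N.
Proof. by rewrite /cnt addnS big_nat_recr //= leq_addr. Qed.

Lemma cnt0 f lo : cnt f lo 0 = 0%N.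
Proof. by rewrite /cnt addn0 big_geq. Qed.

Lemma gen_spec f s k : (k <= s)%N ->
  (gen f s + k <= s)%N = (cnt f (s - k) k == 0%N).
Proof.
elim: s k => [|s IH] k.
  by rewrite leqn0 => /eqP ->; rewrite cnt0.
case: k => [_|k hk].
  by rewrite cnt0 addn0 gen_le.
rewrite cntS subSS /=.
have -> : (s - k + k = s)%N by lia.
case: (f s) => /=.
  by rewrite addn1; apply/idP/idP; lia.
rewrite addn0 addnS ltnS -IH //; have := gen_le f s; lia.
Qed.

Lemma ltn_upd t o d k : (k < upd t o d)%N =
  (k < d)%N && (if o is Some G then (k < t - G + 1)%N else true).
Proof. by case: o => [G|] /=; rewrite ?andbT // leq_min andbC. Qed.

Lemma aoi_pos c t : (0 < aoi c t.+1)%N.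
Proof. by rewrite /= !ltn_upd /=; case: t => [|t] //=; case: (cA c t); case: (cB c t); rewrite //= ?addn1. Qed.

Lemma aoi_spec c t k : (k < aoi c t)%N =
  [&& (k < t)%N, (cnt (cA c) (t.-1 - k) k <= 1)%N &
      (cnt (cB c) (t.-1 - k) k <= 1)%N].
Proof.
elim: t k => [|t IH] k; first by [].
case: k => [|k].
  by rewrite aoi_pos !cnt0.
case: t IH => [|s] IH.
  by rewrite /= /upd.
rewrite [aoi c _]/= !ltn_upd ltnS IH /delivA /delivB -/(cA c s) -/(cB c s).

rewrite [(s.+2.-1)]/= [s.+1.-1]/=.
have [ks|ks] := leqP k s; last first.
  by rewrite ltnNge ks /= ltnS ltnNge ks.
rewrite ltnS ks /=.
have e : (s - k + k = s)%N by lia.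
rewrite subSS !cntS e.
have hA := @gen_spec (cA c) s k ks.
have hB := @gen_spec (cB c) s k ks.
rewrite -genAE in hA; rewrite -genBE in hB.
have gA := gen_le (cA c) s; have gB := gen_le (cB c) s.
rewrite -genAE in gA; rewrite -genBE in gB.
have eA : (k.+1 < s.+1 - genA c s + 1)%N = (genA c s + k <= s)%N by lia.
have eB : (k.+1 < s.+1 - genB c s + 1)%N = (genB c s + k <= s)%N by lia.
case: (cA c s); case: (cB c s); rewrite ?eA ?eB ?hA ?hB /= ?addn0 ?addn1 ?andbT //;
  lia.
Qed.
Lemma prod_bool (I : finType) (P : pred I) (v : I -> bool) :
  (\prod_(i | P i) (v i : nat) = [forall (i | P i), v i])%N.
Proof.
case: (boolP [forall (i | P i), v i]) => [/forall_inP H|/forall_inPn [i Pi nvi]].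
  by rewrite big1 // => i /H ->.
by rewrite (bigD1 i) //= (negbTE nvi) mul0n.
Qed.

Lemma prod_negb (I : finType) (P : pred I) (u : I -> bool) :
  (\prod_(i | P i) (~~ u i : nat) = (\sum_(i | P i) u i == 0))%N.
Proof.
rewrite prod_bool sum_nat_eq0; congr (nat_of_bool _); apply/forall_inP/forall_inP => H i Pi; have := H i Pi; by case: (u i).

Qed.

Lemma ind_le1_nat (I : finType) (u : I -> bool) :
  (((\sum_i u i) <= 1) : nat) =
  (\prod_i (~~ u i : nat) + \sum_j \prod_i ((if i == j then u j else ~~ u i) : nat))%N.
Proof.
set n := (\sum_i u i)%N.
have e j : (\prod_i ((if i == j then u j else ~~ u i) : nat) = u j * (n == 1))%N.
  rewrite (bigD1 j) //= eqxx.
  rewrite (eq_bigr (fun i => (~~ u i : nat))); last first.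
    by move=> i /negbTE ->.
  rewrite prod_negb /n [X in _ = _ * (X == 1)%N](bigD1 j) //=.
  by case: (u j) => /=; rewrite ?mul0n ?mul1n //; case: (\sum_(i | i != j) u i)%N.

rewrite (eq_bigr _ (fun j _ => e j)) -big_distrl /= -/n prod_negb -/n.
clear e; clearbody n; by case: n => [|[|m]] //=; rewrite ?muln0.
Qed.

Lemma sum_ltn_min t n : (\sum_(k < t) (k < n) = minn t n)%N.
Proof.
elim: t => [|t IH]; first by rewrite big_ord0 min0n.
rewrite big_ord_recr /= IH; lia.
Qed.

Lemma aoi_le c t : (aoi c t <= t)%N.
Proof. by rewrite leqNgt aoi_spec ltnn. Qed.

Lemma aoi_sum c t : aoi c t = (\sum_(k < t)
  ((cnt (cA c) (t.-1 - k) k <= 1) && (cnt (cB c) (t.-1 - k) k <= 1)))%N.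
Proof.
rewrite -[LHS](minn_idPr (aoi_le c t)) -sum_ltn_min.
by apply: eq_bigr => k _; rewrite aoi_spec ltn_ord.
Qed.

Lemma sum_window (F : nat -> bool) lo hi t : (lo <= hi)%N -> (hi <= t)%N ->
  (\sum_(lo <= i < hi) F i = \sum_(i < t) ((lo <= i) && (i < hi) && F i))%N.
Proof.
elim: t hi => [|t IH] hi hlo ht.
  have -> : hi = 0%N by lia.
  have -> : lo = 0%N by lia.
  by rewrite big_geq // big_ord0.
rewrite big_ord_recr /=.
have [hit|hit] := leqP hi t.
  by rewrite IH // andbF /= addn0.
have -> : hi = t.+1 by lia.
have [lot|lot] := leqP lo t; last first.
  have -> : lo = t.+1 by lia.
  rewrite big_geq // /= addn0 big1 // => i _.
  by rewrite ltnNge ltnW.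
rewrite big_nat_recr //= (IH t) //.
congr (_ + _)%N; apply: eq_bigr => i _.
by rewrite ltn_ord ltnS (ltnW (ltn_ord i)).
Qed.

Local Open Scope ring_scope.

Section Real.
Variables (R : realType) (a b : R).

Lemma E_prod t (g : 'I_t -> bool * bool -> R) :
  \sum_(w : {ffun 'I_t -> bool * bool}) (\prod_i pslot a b (w i)) * \prod_i g i (w i)
  = \prod_i \sum_x pslot a b x * g i x.
Proof.
rewrite bigA_distr_bigA /=; apply: eq_bigr => w _.
by rewrite -big_split.
Qed.

Lemma sum_pair (h : bool * bool -> R) :
  \sum_x h x = h (true, true) + h (true, false) + (h (false, true) + h (false, false)).
Proof.
have -> : \sum_x h x = \sum_(x | xpredT x.1 && xpredT x.2) h (x.1, x.2).
  by apply: eq_bigr => -[].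
rewrite -(pair_big xpredT xpredT (fun x y => h (x, y))) /= !big_bool /=.
by rewrite addrA.
Qed.

Lemma E_factor t (S1 S2 : Type) (r1 : seq S1) (r2 : seq S2) (gA : S1 -> 'I_t -> bool -> R)
  (gB : S2 -> 'I_t -> bool -> R) :
  \sum_(w : {ffun 'I_t -> bool * bool}) (\prod_i pslot a b (w i)) *
    ((\sum_(s <- r1) \prod_i gA s i (w i).1) * (\sum_(s' <- r2) \prod_i gB s' i (w i).2))
  = (\sum_(s <- r1) \prod_i (a * gA s i true + (1 - a) * gA s i false)) *
    (\sum_(s' <- r2) \prod_i (b * gB s' i true + (1 - b) * gB s' i false)).
Proof.
under eq_bigr do rewrite mulr_suml mulr_sumr.
rewrite exchange_big /= mulr_suml; apply: eq_bigr => s _.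
under eq_bigr do rewrite mulr_sumr mulr_sumr.
rewrite exchange_big /= mulr_sumr; apply: eq_bigr => s' _.
under eq_bigr do rewrite -big_split /=.
rewrite (@E_prod t (fun i x => gA s i x.1 * gB s' i x.2)) -big_split /=; apply: eq_bigr => i _.
rewrite sum_pair /pslot /=.
ring.
Qed.

Definition inW t (k : nat) (i : nat) := ((t.-1 - k <= i) && (i < t.-1))%N.
Definition Gs t k (s : option 'I_t) (i : 'I_t) (x : bool) : R :=
  (match s with None => ~~ (inW t k i && x)
   | Some j => if i == j then inW t k j && x else ~~ (inW t k i && x) end : nat)%:R.
Definition rs t : seq (option 'I_t) := None :: map Some (enum 'I_t).

Lemma ind_real t k (v : 'I_t -> bool) :
  (((\sum_(i < t) (inW t k i && v i)) <= 1)%N : nat)%:R =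
  \sum_(s <- rs t) \prod_i Gs t k s i (v i).
Proof.
rewrite ind_le1_nat natrD big_cons big_map big_enum /= natr_sum natr_prod.
congr (_ + _); apply: eq_bigr => j _; rewrite natr_prod.
by apply: eq_bigr => i _; rewrite /Gs /=; case: eqP => [->|].
Qed.

Lemma card_inW t k : (k < t)%N -> (\sum_(i < t) inW t k i)%N = k.
Proof.
move=> kt.
have -> : (\sum_(i < t) inW t k i = \sum_(i < t) ((t.-1 - k <= i) && (i < t.-1) && (fun _ => true) i))%N.
  by apply: eq_bigr => i _; rewrite andbT.
rewrite -(@sum_window (fun _ => true)); [| lia | lia].
rewrite sum_nat_const_nat muln1; lia.
Qed.

Lemma EA_comp t k (c : R) : 1 - c != 0 -> (k < t)%N ->
  \sum_(s <- rs t) \prod_i (c * Gs t k s i true + (1 - c) * Gs t k s i false)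
  = (1 - c) ^+ k + k%:R * c * (1 - c) ^+ k / (1 - c).
Proof.
move=> hq kt; set q := 1 - c.
pose h (i : 'I_t) := if inW t k i then q else 1.
have ph : \prod_i h i = q ^+ k.
  rewrite -(@card_inW t k kt) -prodrXr; apply: eq_bigr => i _.
  by rewrite /h; case: (inW t k i).
rewrite big_cons big_map big_enum /=.
congr (_ + _).
  rewrite -ph; apply: eq_bigr => i _; rewrite /Gs /h andbT andbF /=.
  by case: (inW t k i); rewrite /= /q; ring.
have tj j : \prod_i (c * Gs t k (Some j) i true + (1 - c) * Gs t k (Some j) i false)
    = c * (inW t k j : nat)%:R * q ^+ k / q.
  apply: (mulIf hq); rewrite divfK //.
  rewrite (bigD1 j) //= -ph [in RHS](bigD1 j) //=.
  rewrite (eq_bigr (fun i => h i)); last first.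
    move=> i /negbTE ne; rewrite /Gs /= ne /h.
    by case: (inW t k i) => /=; rewrite /q; ring.
  by rewrite /Gs /= eqxx /h; case: (inW t k j) => /=; rewrite /q; ring.
under eq_bigr do rewrite tj.
rewrite -!mulr_suml -mulr_sumr -natr_sum (@card_inW t k kt).
by rewrite [c * _]mulrC.
Qed.

End Real.


Lemma cnt_extA t (w : {ffun 'I_t -> bool * bool}) k : (k < t)%N ->
  cnt (cA (ext w)) (t.-1 - k) k = (\sum_(i < t) (inW t k i && (w i).1))%N.
Proof.
move=> kt; rewrite /cnt (@sum_window _ _ _ t); [| lia | lia].
have -> : (t.-1 - k + k = t.-1)%N by lia.
by apply: eq_bigr => i _; rewrite /Defs.compA /ext valK.
Qed.

Lemma cnt_extB t (w : {ffun 'I_t -> bool * bool}) k : (k < t)%N ->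
  cnt (cB (ext w)) (t.-1 - k) k = (\sum_(i < t) (inW t k i && (w i).2))%N.
Proof.
move=> kt; rewrite /cnt (@sum_window _ _ _ t); [| lia | lia].
have -> : (t.-1 - k + k = t.-1)%N by lia.
by apply: eq_bigr => i _; rewrite /Defs.compB /ext valK.
Qed.

Definition fa {R : realType} (c : R) (k : nat) : R :=
  (1 - c) ^+ k + k%:R * c * (1 - c) ^+ k / (1 - c).

Lemma exp_formula (R : realType) (a b : R) t : 1 - a != 0 -> 1 - b != 0 ->
  expected_aoi a b t = \sum_(k < t) fa a k * fa b k.
Proof.
move=> ha hb; rewrite /expected_aoi.
under eq_bigr do rewrite aoi_sum natr_sum mulr_sumr.
rewrite exchange_big /=; apply: eq_bigr => k _.
under eq_bigr => w _ do rewrite (@cnt_extA t w k (ltn_ord k)) (@cnt_extB t w k (ltn_ord k))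
   -mulnb natrM !ind_real.
by rewrite E_factor !EA_comp.
Qed.

Local Open Scope classical_set_scope.
Local Open Scope ring_scope.

Section Lim.
Variable R : realType.

Lemma nexp_bound (s : R) n : 0 <= s -> s < 1 -> n%:R * s ^+ n <= (1 - s)^-1.
Proof.
move=> s0 s1.
have hq : 0 < 1 - s by lra.
rewrite -(ler_pM2l hq) mulfV; last by rewrite gt_eqF.
have le1 : n%:R * s ^+ n <= \sum_(i < n) s ^+ i.
  rewrite mulr_natl -[n in _ *+ n]card_ord -sumr_const; apply: ler_sum => i _.
  by apply: ler_wiXn2l => //; [exact: ltW | exact: ltnW].
have e : (1 - s) * \sum_(i < n) s ^+ i = 1 - s ^+ n.
  have := subrX1 s n; move=> h.
  have -> : (1 - s) * \sum_(i < n) s ^+ i = - ((s - 1) * \sum_(i < n) s ^+ i) by ring.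
  by rewrite -h; ring.
have := ler_wpM2l (ltW hq) le1; rewrite e => h.
have : 0 <= s ^+ n by exact: exprn_ge0.
lra.
Qed.

Lemma nexp_cvg0 (s : R) : 0 <= s -> s < 1 -> (fun n : nat => n%:R * s ^+ n) @ \oo --> 0.
Proof.
move=> s0 s1.
set r := Num.sqrt s.
have r0 : 0 <= r by exact: sqrtr_ge0.
have rs : r ^+ 2 = s by exact: sqr_sqrtr.
have r1 : r < 1 by rewrite -rs in s1; nra.
have B n := @nexp_bound r n r0 r1.
apply: (@squeeze_cvgr _ _ _ _ (fun=> 0) (fun n => (1 - r)^-1 * r ^+ n)).
- near=> n.
  have -> : s ^+ n = r ^+ n * r ^+ n by rewrite -rs -exprM -exprD mul2n addnn.
  apply/andP; split.
    by apply: mulr_ge0; [exact: ler0n | apply: mulr_ge0; exact: exprn_ge0].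
  rewrite mulrA; apply: ler_wpM2r; [exact: exprn_ge0 | exact: B].
- exact: cvg_cst.
- rewrite -(mulr0 (1 - r)^-1); apply: cvgMl_tmp.
  apply: cvg_expr; rewrite ger0_norm //.
Unshelve. all: by end_near.
Qed.

Lemma n2exp_cvg0 (s : R) : 0 <= s -> s < 1 ->
  (fun n : nat => n%:R ^+ 2 * s ^+ n) @ \oo --> 0.
Proof.
move=> s0 s1.
set r := Num.sqrt s.
have r0 : 0 <= r by exact: sqrtr_ge0.
have rs : r ^+ 2 = s by exact: sqr_sqrtr.
have r1 : r < 1 by rewrite -rs in s1; nra.
have e : (fun n : nat => n%:R ^+ 2 * s ^+ n) = (fun n => n%:R * r ^+ n) \* (fun n => n%:R * r ^+ n).
  apply: funext => n /=; rewrite -rs -exprM mulnC exprM; ring.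
rewrite e -(mulr0 0); apply: cvgM; exact: nexp_cvg0.
Qed.

End Lim.

Section Closed.
Variables (R : realType) (a b : R).
Hypotheses (hq : 1 - a != 0) (hr : 1 - b != 0) (hp : 1 - (1 - a) * (1 - b) != 0).

Definition pp := (1 - a) * (1 - b).
Definition c1 := a / (1 - a) + b / (1 - b).
Definition c2 := a * b / pp.
Definition gam := c2 / (1 - pp).
Definition bet := (c1 + 2 * pp * gam) / (1 - pp).
Definition alp := (1 + pp * (bet + gam)) / (1 - pp).

Lemma closed t : \sum_(k < t) fa a k * fa b k =
  alp - pp ^+ t * (alp + bet * t%:R + gam * t%:R ^+ 2).
Proof.
elim: t => [|t IH].
  by rewrite big_ord0 expr0 mul1r mulr0 expr0n /= mulr0 !addr0 subrr.
rewrite big_ord_recr /= IH /fa /alp /bet /gam /c2 /c1 /pp.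
rewrite !exprMn !exprS -natr1.
set X := (1 - a) ^+ t; set Y := (1 - b) ^+ t; set n := t%:R.
have hpp : (1 - a) * (1 - b) != 0 by rewrite mulf_neq0.
field.
by rewrite hq hr hp.
Qed.
End Closed.
Arguments pp {R}. Arguments c1 {R}. Arguments c2 {R}.
Arguments gam {R}. Arguments bet {R}. Arguments alp {R}.

Theorem lemma2 (R : realType) (muA muB : R)
  (hA : 0 < muA < 1) (hB : 0 < muB < 1) :
  avg_aoi muA muB @ \oo -->
    ((2 * (muA ^+ 2 + muB ^+ 2 + 3 * muA * muB - 3 * muA ^+ 2 * muB
          - 3 * muA * muB ^+ 2 + 2 * muA ^+ 2 * muB ^+ 2))
    / (muA + muB - muA * muB) ^+ 3 : R).
Proof.
have/andP [a0 a1] := hA; have/andP [b0 b1] := hB.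
have hq : 1 - muA != 0 by rewrite gt_eqF // subr_gt0.
have hr : 1 - muB != 0 by rewrite gt_eqF // subr_gt0.
have hp0 : 0 < 1 - (1 - muA) * (1 - muB) by nra.
have hp : 1 - (1 - muA) * (1 - muB) != 0 by rewrite gt_eqF.
have hs : muA + muB - muA * muB != 0.
  by rewrite gt_eqF //; nra.
have pp0 : 0 <= pp muA muB by rewrite /pp; nra.
have pp1 : pp muA muB < 1 by rewrite /pp; nra.
set L := alp muA muB.
have -> : (2 * (muA ^+ 2 + muB ^+ 2 + 3 * muA * muB - 3 * muA ^+ 2 * muB
          - 3 * muA * muB ^+ 2 + 2 * muA ^+ 2 * muB ^+ 2))
    / (muA + muB - muA * muB) ^+ 3 = L.
  rewrite /L /alp /bet /gam /c2 /c1 /pp.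
  field.
  by rewrite hq hr hp.
rewrite -(@cvg_shiftS _ (avg_aoi muA muB)).
have -> : [sequence avg_aoi muA muB n.+1]_n = arithmetic_mean (expected_aoi muA muB).
  by apply: funext => n; rewrite /avg_aoi /arithmetic_mean /= seriesEord.
apply: cesaro.
have -> : expected_aoi muA muB = fun t : nat =>
    L - pp muA muB ^+ t * (L + bet muA muB * t%:R + gam muA muB * t%:R ^+ 2).
  by apply: funext => t; rewrite exp_formula // closed.
have H : (fun t : nat => pp muA muB ^+ t * (L + bet muA muB * t%:R + gam muA muB * t%:R ^+ 2))
    @ \oo --> 0.
  have -> : (fun t : nat => pp muA muB ^+ t * (L + bet muA muB * t%:R + gam muA muB * t%:R ^+ 2))
     = (fun t : nat => L * pp muA muB ^+ t + bet muA muB * (t%:R * pp muA muB ^+ t)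
         + gam muA muB * (t%:R ^+ 2 * pp muA muB ^+ t)).
    by apply: funext => t; ring.
  rewrite [X in _ --> X](_ : 0 = L * 0 + bet muA muB * 0 + gam muA muB * 0); last by ring.
  apply: cvgD; [apply: cvgD|]; apply: cvgMl_tmp.
  - by apply: cvg_expr; rewrite ger0_norm.
  - exact: nexp_cvg0.
  - exact: n2exp_cvg0.
rewrite [X in _ --> X](_ : L = L - 0); last by rewrite subr0.
apply: cvgB; [exact: cvg_cst | exact: H].
Qed.
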